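(* Let $\mathcal{L}$ be a subspace of $\ell^2(G)$ containing $\mathcal{K}(G)$, and let $\|\cdot\|'$ be a norm on $\mathcal{L}$ such that $\|\,|f|\,\|' = \|f\|'$ for all $f\in\mathcal{K}(G)$. If $G$ (i.e. the pair $(G,1)$ with the trivial cocycle) has the $\mathcal{L}$-decay property with respect to $\|\cdot\|'$, then $(G,\sigma)$ has the $\mathcal{L}$-decay property with respect to $\|\cdot\|'$ for every normalized 2-cocycle $\sigma$.
   Context: $G$ is a discrete group with identity $e$, and $\sigma : G\times G \to \mathbb{T}$ is a normalized 2-cocycle, i.e. $\sigma(g,h)\sigma(gh,k)=\sigma(h,k)\sigma(g,hk)$ and $\sigma(g,e)=\sigma(e,g)=1$. $\Lambda_\sigma(g)$ is the unitary on $\ell^2(G)$ given by $(\Lambda_\sigma(g)\xi)(h)=\sigma(g,g^{-1}h)\xi(g^{-1}h)$; $\lambda=\Lambda_1$. $C^*_r(G,\sigma)$ is the operator-norm closed $*$-subalgebra of $B(\ell^2(G))$ generated by $\Lambda_\sigma(G)$. $\mathcal{K}(G)$ is the space of finitely supported complex functions on $G$; for $f\in\mathcal{K}(G)$, $\pi_\sigma(f)=\sum_{g}f(g)\Lambda_\sigma(g)$. For a finite $F\subseteq G$ and a function $\xi$, $\xi_F=\xi\chi_F$. If $\mathcal{L}\supseteq\mathcal{K}(G)$ is a subspace of $\ell^2(G)$ with a norm $\|\cdot\|'$, an element $\xi\in\mathcal{L}$ tends to $0$ at infinity w.r.t. $\|\cdot\|'$ if for every $\varepsilon>0$ there is a finite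 $F_0\subseteq G$ with $\|\xi_F\|'<\varepsilon$ for all finite $F$ disjoint from $F_0$. $(G,\sigma)$ has the $\mathcal{L}$-decay property w.r.t. $\|\cdot\|'$ if (i) every $\xi\in\mathcal{L}$ tends to $0$ at infinity w.r.t. $\|\cdot\|'$, and (ii) the map $f\mapsto\pi_\sigma(f)$ from $(\mathcal{K}(G),\|\cdot\|')$ to $(C^*_r(G,\sigma),\text{operator norm})$ is bounded. *)

(* Defs.v *)
From HB Require Import structures.
From mathcomp Require Import all_boot all_order all_algebra.
From mathcomp Require Import all_classical all_reals.
From mathcomp Require Import esum.
From mathcomp Require Import complex.
Set Implicit Arguments. Unset Strict Implicit. Unset Printing Implicit Defensive.
Import Order.TTheory GRing.Theory Num.Theory.
Local Open Scope classical_set_scope.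
Local Open Scope ring_scope.

Definition cabs (R : realType) (z : R[i]) : R := ComplexField.Normc.normc z.

Definition absfun (R : realType) (G : Type) (f : G -> R[i]) : G -> R[i] :=
  fun g => ((cabs (f g))%:C)%C.

Definition is_group (G : Type) (mul : G -> G -> G) (inv : G -> G) (e : G) : Prop :=
  [/\ forall x y z, mul x (mul y z) = mul (mul x y) z,
      forall x, mul e x = x, forall x, mul x e = x,
      forall x, mul (inv x) x = e & forall x, mul x (inv x) = e].

Definition normalized_2cocycle (R : realType) (G : Type) (mul : G -> G -> G) (e : G)
    (sigma : G -> G -> R[i]) : Prop :=
  [/\ forall g h, cabs (sigma g h) = 1,
      forall g h k, sigma g h * sigma (mul g h) k = sigma h k * sigma g (mul h k),
      forall g, sigma g e = 1 & forall g, sigma e g = 1].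

Definition finsupp (R : realType) (G : Type) (f : G -> R[i]) : Prop :=
  finite_set [set g | f g != 0].

Definition l2sq (R : realType) (G : Type) (xi : G -> R[i]) : \bar R :=
  esum (T := {classic G}) setT (fun g => ((cabs (xi g)) ^+ 2)%:E).

Definition in_l2 (R : realType) (G : Type) (xi : G -> R[i]) : Prop :=
  (l2sq xi < +oo)%E.

Definition l2norm (R : realType) (G : Type) (xi : G -> R[i]) : R :=
  Num.sqrt (fine (l2sq xi)).

Definition restr (R : realType) (G : Type) (F : set G) (xi : G -> R[i]) : G -> R[i] :=
  fun g => if g \in F then xi g else 0.

Definition pi_sigma (R : realType) (G : Type) (mul : G -> G -> G) (inv : G -> G)
    (sigma : G -> G -> R[i]) (f : G -> R[i]) (xi : G -> R[i]) : G -> R[i] :=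
  fun h => \sum_(g \in (setT : set {classic G}))
             f g * sigma g (mul (inv g) h) * xi (mul (inv g) h).

Definition tends_to_zero_at_infinity (R : realType) (G : Type)
    (nrm : (G -> R[i]) -> R) (xi : G -> R[i]) : Prop :=
  forall eps : R, 0 < eps ->
    exists F0 : set G, finite_set F0 /\
      forall F : set G, finite_set F -> F `&` F0 = set0 -> nrm (restr F xi) < eps.

(* (G, sigma) has the L-decay property w.r.t. nrm.
   (ii) boundedness of f |-> pi_sigma(f) from (K(G), nrm) to the operator norm on
   B(l^2(G)), written out: ||pi_sigma(f) xi||_2 <= C ||f||' ||xi||_2. *)
Definition decay_property (R : realType) (G : Type) (mul : G -> G -> G) (inv : G -> G)
    (sigma : G -> G -> R[i]) (L : set (G -> R[i])) (nrm : (G -> R[i]) -> R) : Prop :=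
  (forall xi, L xi -> tends_to_zero_at_infinity nrm xi) /\
  exists C : R, forall f, finsupp f -> forall xi, in_l2 xi ->
    l2norm (pi_sigma mul inv sigma f xi) <= C * nrm f * l2norm xi.

Definition l2_subspace_containing_K (R : realType) (G : Type) (L : set (G -> R[i])) : Prop :=
  [/\ forall xi, L xi -> in_l2 xi,
      L (fun _ => 0),
      forall xi eta, L xi -> L eta -> L (fun g => xi g + eta g),
      forall (a : R[i]) xi, L xi -> L (fun g => a * xi g)
    & forall f, finsupp f -> L f].

Definition is_norm_on (R : realType) (G : Type) (L : set (G -> R[i]))
    (nrm : (G -> R[i]) -> R) : Prop :=
  [/\ forall xi, L xi -> 0 <= nrm xi,
      forall xi, L xi -> nrm xi = 0 -> xi = (fun _ => 0),
      forall (a : R[i]) xi, L xi -> nrm (fun g => a * xi g) = cabs a * nrm xi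
    & forall xi eta, L xi -> L eta -> nrm (fun g => xi g + eta g) <= nrm xi + nrm eta].

(* Main.v *)
Require Import Defs.
From HB Require Import structures.
From mathcomp Require Import all_boot all_order all_algebra.
From mathcomp Require Import all_classical all_reals.
From mathcomp Require finmap.
From mathcomp Require Import esum complex.
From mathcomp Require Import ring lra.
Import Order.TTheory GRing.Theory Num.Theory.
Local Open Scope classical_set_scope.
Local Open Scope ring_scope.

Module Helpers.
Import finmap.
Section H.
Variable R : realType.

Lemma cabs_ge0 (z : R[i]) : 0 <= cabs z.
Proof. by case: z => a b; rewrite /cabs /= sqrtr_ge0. Qed.

Lemma cabsC (x : R) : 0 <= x -> cabs (x%:C)%C = x.
Proof.
by move=> hx; rewrite /cabs /= expr0n /= addr0 sqrtr_sqr ger0_norm.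
Qed.

Lemma cabsM (a b : R[i]) : cabs (a * b) = cabs a * cabs b.
Proof. exact: ComplexField.Normc.normcM. Qed.

Lemma cabsD (a b : R[i]) : cabs (a + b) <= cabs a + cabs b.
Proof. exact: le_normcD. Qed.

Lemma cabs0 : cabs (0 : R[i]) = 0.
Proof. exact: ComplexField.Normc.normc0. Qed.

Lemma cabs_eq0 (z : R[i]) : (cabs z == 0) = (z == 0).
Proof.
apply/eqP/eqP => [/ComplexField.Normc.eq0_normc //|->]; exact: cabs0.
Qed.

Lemma supp_seq (T : choiceType) (f : T -> R[i]) :
  finite_set [set g | f g != 0] ->
  exists s : seq T, forall F : T -> R[i], (forall i, f i = 0 -> F i = 0) ->
    \sum_(g \in [set: T]) F g = \sum_(g <- s) F g.
Proof.
move=> Hf; exists (fset_set [set g | f g != 0]) => F HF.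
apply: fsbigTE => i; rewrite in_fset_set // notin_setE /= => H; apply: HF.
by case: (eqVneq (f i) 0) => // fi; exfalso; apply: H.
Qed.

Lemma seqsum_le (T : Type) (F : T -> R[i]) (s : seq T) :
  cabs (\sum_(g <- s) F g) <= \sum_(g <- s) cabs (F g).
Proof.
apply: (big_rec2 (fun y1 y2 => cabs y1 <= y2)); first by rewrite cabs0.
move=> i y1 y2 _ Hy; apply: le_trans (cabsD _ _) _; exact: lerD.
Qed.

Variable G : Type.

Definition rl2 (u : G -> R) : \bar R :=
  esum (T := {classic G}) setT (fun g => ((u g) ^+ 2)%:E).

Lemma rl2_ge0 u : (0 <= rl2 u)%E.
Proof. by apply: esum_ge0 => g _; rewrite lee_fin sqr_ge0. Qed.

Lemma rl2_le u v : (forall g, u g ^+ 2 <= v g ^+ 2) -> (rl2 u <= rl2 v)%E.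
Proof. by move=> H; apply: le_esum => g _; rewrite lee_fin. Qed.

Lemma fin_sum_lt (I : Type) (s : seq I) (a : I -> \bar R) :
  (forall i, (a i < +oo)%E) -> (\sum_(i <- s) a i < +oo)%E.
Proof.
move=> H; elim: s => [|j s IH]; first by rewrite big_nil ltry.
by rewrite big_cons; apply: lte_add_pinfty.
Qed.

Lemma rl2_scale c x : (rl2 x < +oo)%E -> (rl2 (fun h => (c * x h)%R) < +oo)%E.
Proof.
move=> Hx.
have c2 : 0 <= c ^+ 2 by rewrite sqr_ge0.
set n := Num.Def.archi_bound (c ^+ 2).
have hn : c ^+ 2 <= n%:R by apply: ltW; apply: archi_boundP.
apply: (@le_lt_trans _ _ (\sum_(j < n) rl2 x)); last by apply: fin_sum_lt.
rewrite /rl2 -esum_sum; last by move=> *; rewrite lee_fin sqr_ge0.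
apply: le_esum => g _; rewrite sumEFin lee_fin sumr_const card_ord -mulr_natl.
by rewrite exprMn; apply: ler_wpM2r => //; rewrite sqr_ge0.
Qed.

Lemma rl2_add u v : (rl2 u < +oo)%E -> (rl2 v < +oo)%E ->
  (rl2 (fun h => (u h + v h)%R) < +oo)%E.
Proof.
move=> Hu Hv.
apply: (@le_lt_trans _ _ ((rl2 u + rl2 u) + (rl2 v + rl2 v))%E); last first.
  by apply: lte_add_pinfty; apply: lte_add_pinfty.
have P w g : (0 <= ((w g : R) ^+ 2)%:E)%E by rewrite lee_fin sqr_ge0.
rewrite /rl2 -!esumD //; last first.
  by move=> g _; rewrite adde_ge0.
  by move=> g _; rewrite adde_ge0.
apply: le_esum => g _; rewrite -!EFinD lee_fin.
have := sqr_ge0 (u g - v g); rewrite !expr2; nra.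
Qed.

Variables (mul : G -> G -> G) (inv : G -> G) (e : G).
Hypothesis HG : is_group mul inv e.

Lemma mulK g i : mul (inv g) (mul g i) = i.
Proof. by case: HG => A L1 _ V _; rewrite A V L1. Qed.

Lemma mulKV g i : mul g (mul (inv g) i) = i.
Proof. by case: HG => A L1 _ _ V; rewrite A V L1. Qed.

Lemma rl2_translate x g : rl2 (fun h => x (mul (inv g) h)) = rl2 x.
Proof.
rewrite /rl2 (@reindex_esum _ {classic G} {classic G} setT setT (mul g)).
  by apply: eq_esum => i _; rewrite mulK.
rewrite setTT_bijective; exists (mul (inv g)) => i; [exact: mulK|exact: mulKV].
Qed.

Lemma rl2_sum (x : G -> R) (a : G -> R) (s : seq G) : (rl2 x < +oo)%E ->
  (rl2 (fun h => (\sum_(g <- s) a g * x (mul (inv g) h))%R) < +oo)%E.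
Proof.
move=> Hx; elim: s => [|g s IH].
  rewrite /rl2 esum1 ?ltry // => i _; by rewrite big_nil expr0n.
have -> : (fun h => \sum_(g0 <- g :: s) a g0 * x (mul (inv g0) h)) =
   (fun h => a g * x (mul (inv g) h) + \sum_(g0 <- s) a g0 * x (mul (inv g0) h)).
  by apply: funext => h; rewrite big_cons.
apply: rl2_add => //.
have := @rl2_scale (a g) (fun h => x (mul (inv g) h)); rewrite rl2_translate; exact.
Qed.

End H.
Arguments rl2 {R G} u.
Arguments rl2_ge0 {R G} u.
Arguments rl2_le {R G} u v.
Arguments rl2_sum {R G mul inv e} HG x a s.
End Helpers.
Import Helpers.

Theorem proposition3p3 (R : realType) (G : Type) (mul : G -> G -> G) (inv : G -> G) (e : G)
    (HG : is_group mul inv e)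
    (L : set (G -> R[i])) (nrm : (G -> R[i]) -> R)
    (HL : l2_subspace_containing_K L) (Hnrm : is_norm_on L nrm)
    (Habs : forall f : G -> R[i], finsupp f -> nrm (absfun f) = nrm f)
    (Htriv : decay_property mul inv (fun _ _ => 1) L nrm) :
  forall sigma : G -> G -> R[i], normalized_2cocycle mul e sigma ->
    decay_property mul inv sigma L nrm.
Proof.
move=> sigma [Hs1 _ _ _]; case: Htriv => Hi [C HC]; split => //.
exists C => f Hf xi Hxi.
have Hfa : finsupp (absfun f).
  rewrite /finsupp; suff -> : [set g | absfun f g != 0] = [set g | f g != 0] by [].
  
  apply: funext => g; rewrite /absfun /= -[f g == 0]cabs_eq0; congr negb.
  by apply/eqP/eqP => [[]|->].
have Exi : l2sq (absfun xi) = l2sq xi.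
  by rewrite /l2sq; congr esum; apply: funext => g; rewrite /absfun cabsC ?cabs_ge0.
have Hxia : in_l2 (absfun xi) by rewrite /in_l2 Exi.
have := HC _ Hfa _ Hxia; rewrite Habs // /l2norm Exi => Hb.
apply: le_trans Hb.
have [S HS] := @supp_seq R {classic G} f Hf.
set Y := fun h : G => \sum_(g <- S) cabs (f g) * cabs (xi (mul (inv g) h)).
have Y0 h : 0 <= Y h by apply: sumr_ge0 => g _; rewrite mulr_ge0 ?cabs_ge0.
have E1 h : cabs (pi_sigma mul inv (fun _ _ => 1) (absfun f) (absfun xi) h) = Y h.
  rewrite /pi_sigma HS; last by move=> i; rewrite /absfun => ->; rewrite cabs0 !mul0r.
  rewrite -[X in _ = X]cabsC // /Y rmorph_sum; congr cabs; apply: eq_bigr => g _.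
  by rewrite /absfun mulr1 rmorphM.
have E2 h : cabs (pi_sigma mul inv sigma f xi h) <= Y h.
  rewrite /pi_sigma HS; last by move=> i ->; rewrite !mul0r.
  apply: le_trans (@seqsum_le R _ _ _) _.
  by apply: ler_sum => g _; rewrite !cabsM Hs1 mulr1.
have Hfin : (l2sq (pi_sigma mul inv (fun _ _ => 1%R) (absfun f) (absfun xi)) < +oo)%E.
  have -> : l2sq (pi_sigma mul inv (fun _ _ => 1) (absfun f) (absfun xi)) = rl2 Y.
    by rewrite /l2sq /rl2; congr esum; apply: funext => h; rewrite E1.
  exact: (rl2_sum HG (fun g => cabs (xi g))).
apply: ler_wsqrtr; apply: fine_le.
- rewrite ge0_fin_numE; last exact: (rl2_ge0 (fun g => cabs _)).
  apply: le_lt_trans Hfin.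
  apply: (rl2_le (fun g => cabs _) (fun g => cabs _)) => h.
  rewrite E1; apply: lerXn2r; rewrite ?nnegrE ?cabs_ge0 //.
- by rewrite ge0_fin_numE //; exact: (rl2_ge0 (fun g => cabs _)).
- apply: (rl2_le (fun g => cabs _) (fun g => cabs _)) => h.
  rewrite E1; apply: lerXn2r; rewrite ?nnegrE ?cabs_ge0 //.
Qed.
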